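(* For every positive integer $k$, there exist a binary matrix $A_k$ and binary column vectors $x_1,\dots,x_k$ such that $R_{binary}(A_k|x_i)=R_{binary}(A_k)=4$ for all $1\le i\le k$, but $R_{binary}(A_k|x_1,\dots,x_k)=k+3$.
   Context: For a binary $n\times m$ matrix $A$, $R_{binary}(A)$ is the least $k$ such that $A=UV$ with $U\in\{0,1\}^{n\times k}$, $V\in\{0,1\}^{k\times m}$, ordinary arithmetic. $(A|x_1,\dots,x_t)$ denotes $A$ with the columns $x_1,\dots,x_t$ appended on the right. *)

(* Defs.v *)
(* Binary matrices are 'M[nat]_(n,m) whose entries are 0 or 1;
   products are computed in ordinary (nat) arithmetic. *)
From mathcomp Require Import all_boot all_order all_algebra.
Set Implicit Arguments. Unset Strict Implicit. Unset Printing Implicit Defensive.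

Definition binary_mx (n m : nat) (A : 'M[nat]_(n, m)) : Prop :=
  forall i j, A i j <= 1.

Definition binary_factorizable (n m : nat) (A : 'M[nat]_(n, m)) (k : nat) : Prop :=
  exists (U : 'M[nat]_(n, k)) (V : 'M[nat]_(k, m)),
    binary_mx U /\ binary_mx V /\
    forall i j, A i j = \sum_(l < k) U i l * V l j.

Definition binary_rank_is (n m : nat) (A : 'M[nat]_(n, m)) (r : nat) : Prop :=
  binary_factorizable A r /\ forall k, k < r -> ~ binary_factorizable A k.

(* Main.v *)
Require Import Defs.
From mathcomp Require Import all_boot all_order all_algebra zify.

Lemma fooling (n m r p : nat) (M : 'M[nat]_(n,m)) (fr : 'I_p -> 'I_n) (fc : 'I_p -> 'I_m) :
  (forall t, 0 < M (fr t) (fc t)) ->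
  (forall t t', t != t' -> (M (fr t) (fc t') == 0) || (M (fr t') (fc t) == 0)) ->
  binary_factorizable M r -> p <= r.
Proof.
move=> H1 H2 [U [V [_ [_ HM]]]].
have ex t : exists l : 'I_r, 0 < U (fr t) l * V l (fc t).
  have := H1 t; rewrite HM => Hs.
  apply/existsP; apply: contraLR Hs; rewrite negb_exists => /forallP Hall.
  by rewrite -leqNgt leqn0 sum_nat_eq0; apply/forallP => l; have := Hall l; rewrite lt0n negbK.
have [g Hg] := fin_all_exists ex.
have pos i j l : 0 < U i l * V l j -> 0 < M i j.
  move=> H; rewrite HM (bigD1 l) //=; exact: leq_trans H (leq_addr _ _).
have inj : injective g.
  move=> t t' Eg; apply/eqP; apply: contraT => Ht.
  have := Hg t; have := Hg t'; rewrite !muln_gt0 -Eg => /andP[u' v'] /andP[u v].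
  have P1 : 0 < M (fr t) (fc t') by apply: (pos _ _ (g t)); rewrite muln_gt0 u v'.
  have P2 : 0 < M (fr t') (fc t) by apply: (pos _ _ (g t)); rewrite muln_gt0 u' v.
  by case/orP: (H2 _ _ Ht) => /eqP E; [rewrite E in P1 | rewrite E in P2].
by have := leq_card _ inj; rewrite !card_ord.
Qed.

Lemma fact_rowl (n m1 m2 r : nat) (A : 'M[nat]_(n,m1)) (B : 'M[nat]_(n,m2)) :
  binary_factorizable (row_mx A B) r -> binary_factorizable A r.
Proof.
move=> [U [V [HU [HV HM]]]]; exists U, (lsubmx V); split => //; split.
  by move=> i j; rewrite mxE.
move=> i j; rewrite -(row_mxEl A B) HM; apply: eq_bigr => l _; by rewrite mxE.
Qed.

Lemma fact_nat (n m r : nat) (M : 'M[nat]_(n,m)) (Mf Uf Vf : nat -> nat -> bool) :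
  (forall (i : 'I_n) (j : 'I_m), M i j = Mf i j) ->
  (forall i j, i < n -> j < m -> (Mf i j : nat) = \sum_(0 <= l < r) (Uf i l * Vf l j)) ->
  binary_factorizable M r.
Proof.
move=> HM H.
exists (\matrix_(i < n, l < r) nat_of_bool (Uf i l))%R, (\matrix_(l < r, j < m) nat_of_bool (Vf l j))%R.
split; first by move=> i j; rewrite mxE; case: (Uf _ _).
split; first by move=> i j; rewrite mxE; case: (Vf _ _).
move=> i j; rewrite HM H // big_mkord; apply: eq_bigr => l _; by rewrite !mxE.
Qed.

Lemma sum4 (G : nat -> nat) : \sum_(0 <= l < 4) G l = G 0 + G 1 + G 2 + G 3.
Proof. by rewrite !big_nat_recl // big_geq // addn0 !addnA. Qed.

Lemma sum_pick (m N p : nat) (F : nat -> nat) :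
  \sum_(m <= l < N) (F l * (p == l)) = if (m <= p < N) then F p else 0.
Proof.
case: ifP => Hp.
  rewrite (big_rem p) ?mem_index_iota //= eqxx muln1 big1_seq ?addn0 // => l /andP[_].
  rewrite mem_rem_uniq ?iota_uniq // => /andP[/= Hl _]; by rewrite eq_sym (negbTE Hl) muln0.
rewrite big1_seq // => l /andP[_]; rewrite mem_index_iota => Hl.
case: eqP => [E|]; last by rewrite muln0.
by rewrite E Hl in Hp.
Qed.

Definition Af (i j : nat) : bool :=
  match i with 0 => (j==0)||(j==1) | 1 => (j==1)||(j==2) | 2 => (j==2)||(j==3)
  | 3 => (j==3)||(j==0) | _ => true end.
Definition Xf (i t : nat) : bool := (i == 0) || (i == t.+4).
Definition Mf (i j : nat) : bool := if j < 4 then Af i j else Xf i (j - 4).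
Definition Mtf (t i j : nat) : bool := if j < 4 then Af i j else Xf i t.
Definition Amx k : 'M[nat]_(k+4, 4) := (\matrix_(i < k+4, j < 4) nat_of_bool (Af i j))%R.
Definition Xmx k : 'M[nat]_(k+4, k) := (\matrix_(i < k+4, t < k) nat_of_bool (Xf i t))%R.

Lemma rowE_full k (i : 'I_(k+4)) (j : 'I_(4+k)) : row_mx (Amx k) (Xmx k) i j = Mf i j.
Proof.
rewrite mxE; case: splitP => j' ->; rewrite !mxE /Mf ?ltn_ord //.
by rewrite ltnNge leq_addr /= addKn.
Qed.

Lemma rowE_col k (t : 'I_k) (i : 'I_(k+4)) (j : 'I_(4+1)) :
  row_mx (Amx k) (col t (Xmx k)) i j = Mtf t i j.
Proof.
rewrite mxE; case: splitP => j' ->; rewrite !mxE /Mtf ?ltn_ord //;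
by rewrite ?ltnNge ?leq_addr.
Qed.

Lemma Af_fool a b : a < 4 -> b < 4 -> a != b -> (~~ Af a b) || (~~ Af b a).
Proof. by case: a => [|[|[|[|a]]]]; case: b => [|[|[|[|b]]]]. Qed.

Lemma A_lower k r : binary_factorizable (Amx k) r -> 4 <= r.
Proof.
apply: (@fooling _ _ _ 4 _ (fun t => widen_ord (leq_addl k 4) t) id).
  move=> t; rewrite mxE /=; by case: t => [[|[|[|[|]]]]].
move=> t t' Ht; rewrite !mxE /=.
have := Af_fool _ _ (ltn_ord t) (ltn_ord t') Ht.
by case: (Af t t'); case: (Af t' t).
Qed.

Lemma A_fact k : binary_factorizable (Amx k) 4.
Proof.
apply: (@fact_nat _ _ _ _ Af Af (fun l j => l == j)).
  by move=> i j; rewrite mxE.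
move=> i j _; rewrite sum4.
by case: j => [|[|[|[|j]]]] //= _; rewrite ?muln1 ?muln0 ?addn0 ?add0n.
Qed.

Definition Uf (t i l : nat) : bool :=
  match l with 0 => (i==0)||(i==t.+4) | 1 => (i==1)||((3 < i) && (i != t.+4))
  | 2 => (i==2)||(i==t.+4) | _ => (i==3)||((3<i)&&(i != t.+4)) end.
Definition Vf (l j : nat) : bool :=
  match l with 0 => (j==0)||(j==1)||(j==4) | 1 => (j==1)||(j==2)
  | 2 => (j==2)||(j==3) | _ => (j==3)||(j==0) end.

Lemma col_fact k (t : 'I_k) : binary_factorizable (row_mx (Amx k) (col t (Xmx k))) 4.
Proof.
apply: (@fact_nat _ _ _ _ (Mtf t) (Uf t) Vf).
  by move=> i j; rewrite rowE_col.
move=> i j _ Hj; rewrite sum4 /Mtf /Uf /Vf /Xf /Af.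
case: j Hj => [|[|[|[|[|j]]]]] // _; case: i => [|[|[|[|i]]]] //=; case: eqP => //.
Qed.

Definition Uf3 (i l : nat) : bool := if l < 4 then Uf 0 i l else (i==0)||(i==l.+1).
Definition Vf3 (l j : nat) : bool := if l < 4 then Vf l j else (j == l.+1).

Lemma tail_eq N i j : \sum_(4 <= l < N) (Uf3 i l * Vf3 l j) =
   if (4 < j <= N) then ((i==0)||(i==j) : nat) else 0.
Proof.
rewrite (eq_big_nat _ _ (F2 := fun l => ((i==0)||(i==l.+1) : nat) * (j == l.+1))); last first.
  by move=> l /andP[Hl _]; rewrite /Uf3 /Vf3 ltnNge Hl.
case: j => [|j].
  by rewrite big1_seq // => l _; rewrite muln0.
rewrite (eq_bigr (fun l => ((i==0)||(i==l.+1) : nat) * (j == l))) //.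
by rewrite sum_pick ltnS.
Qed.

Lemma full_fact k : 0 < k -> binary_factorizable (row_mx (Amx k) (Xmx k)) (k + 3).
Proof.
move=> Hk.
apply: (@fact_nat _ _ _ _ Mf Uf3 Vf3).
  by move=> i j; rewrite rowE_full.
move=> i j _ Hj.
rewrite (big_cat_nat _ (n:=4)) //; last by rewrite addn3.
rewrite tail_eq sum4 /Mf /Uf3 /Vf3 /Uf /Vf /Xf /Af /=.
case: j Hj => [|[|[|[|[|j]]]]] Hj /=.
1-5: rewrite addn0; case: i => [|[|[|[|[|i]]]]] //=.
have Hj' : j.+4 < k + 3 by lia.
by rewrite Hj' !muln0 !add0n !subSS subn0.
Qed.

Lemma Mf_diag a : 0 < a -> Mf a a.
Proof. case: a => [|[|[|[|a]]]] //= _; by rewrite /Mf /Xf /= !subSS subn0.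
Qed.

Lemma Mf_fool a b : 0 < a -> 0 < b -> a != b -> ~~ Mf a b || ~~ Mf b a.
Proof.
case: a => [|[|[|[|a]]]] //= _; case: b => [|[|[|[|b]]]] //= _;
  rewrite /Mf /Xf /= ?subSS ?subn0 //.
move=> H; by rewrite eqSS H.
Qed.

Lemma full_lower k r : binary_factorizable (row_mx (Amx k) (Xmx k)) r -> k + 3 <= r.
Proof.
have h1 (s : 'I_(k+3)) : s.+1 < k + 4 by have := ltn_ord s; lia.
have h2 (s : 'I_(k+3)) : s.+1 < 4 + k by have := ltn_ord s; lia.
apply: (@fooling _ _ _ (k+3) _ (fun s => Ordinal (h1 s)) (fun s => Ordinal (h2 s))).
  by move=> t; rewrite rowE_full /= Mf_diag.
move=> t t' Ht; rewrite !rowE_full /=.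
have := @Mf_fool t.+1 t'.+1 isT isT; rewrite eqSS => /(_ Ht).
by case: (Mf _ _); case: (Mf _ _).
Qed.

Theorem theorem5 :
  forall k : nat, 0 < k ->
  exists (n m : nat) (A : 'M[nat]_(n, m)) (X : 'M[nat]_(n, k)),
    [/\ binary_mx A, binary_mx X,
        binary_rank_is A 4,
        (forall i : 'I_k, binary_rank_is (row_mx A (col i X)) 4)
      & binary_rank_is (row_mx A X) (k + 3)].
Proof.
move=> k Hk; exists (k + 4), 4, (Amx k), (Xmx k); split.
- by move=> i j; rewrite mxE; case: (Af _ _).
- by move=> i j; rewrite mxE; case: (Xf _ _).
- split; first exact: A_fact.
  by move=> r Hr /A_lower; rewrite leqNgt Hr.
- move=> t; split; first exact: col_fact.
  by move=> r Hr /fact_rowl /A_lower; rewrite leqNgt Hr.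
- split; first exact: full_fact.
  by move=> r Hr /full_lower; rewrite leqNgt Hr.
Qed.
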